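(* Let $G$ be a graph and $X\subseteq V(G)$ a vertex cover of $G$. For any set $\mathcal{B}$ of closed neighborhoods of $G$, NCTD$(\mathcal{B})\le 2^{|X|+1}+|X|$.
   Context: $N[v]$ is the closed neighborhood of $v$. A teaching map for a set $\mathcal{B}$ of closed neighborhoods assigns to each $B\in\mathcal{B}$ a set $T(B)\subseteq V(G)$. A vertex $w$ distinguishes $B,B'$ if $w$ lies in exactly one of $B,B'$. $T$ is non-clashing if for all distinct $B,B'\in\mathcal{B}$ some $w\in T(B)\cup T(B')$ distinguishes $B$ and $B'$; its size is $\max_{B\in\mathcal{B}}|T(B)|$. NCTD$(\mathcal{B})$ is the minimum size of a non-clashing teaching map for $\mathcal{B}$. *)

(* Defs.v *)
From mathcomp Require Import all_boot.
Set Implicit Arguments. Unset Strict Implicit. Unset Printing Implicit Defensive.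

(* A (finite simple) graph on vertex type T is a symmetric irreflexive relation e. *)

Definition cnbh (T : finType) (e : rel T) (v : T) : {set T} :=
  [set u | (u == v) || e v u].

Definition vertex_cover (T : finType) (e : rel T) (X : {set T}) : Prop :=
  forall u v, e u v -> (u \in X) || (v \in X).

Definition is_cnbh_family (T : finType) (e : rel T) (B : {set {set T}}) : Prop :=
  forall S, S \in B -> exists v, S = cnbh e v.

(* a teaching map assigns to each set a set of vertices (only values on B matter) *)
Definition non_clashing (T : finType) (B : {set {set T}})
  (Tm : {ffun {set T} -> {set T}}) : bool :=
  [forall S in B, forall S' in B, (S != S') ==>
     [exists w in Tm S :|: Tm S', (w \in S) != (w \in S')]].

Definition tmap_size (T : finType) (B : {set {set T}})
  (Tm : {ffun {set T} -> {set T}}) : nat :=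
  \max_(S in B) #|Tm S|.

Definition has_nc_map_of_size (T : finType) (B : {set {set T}}) (n : nat) : bool :=
  [exists Tm : {ffun {set T} -> {set T}}, non_clashing B Tm && (tmap_size B Tm <= n)].

Lemma has_nc_map_exists (T : finType) (B : {set {set T}}) :
  exists n, has_nc_map_of_size B n.
Proof.
exists #|T|; apply/existsP; exists [ffun _ => setT]; apply/andP; split.
- apply/forallP => S; apply/implyP => _; apply/forallP => S'; apply/implyP => _.
  apply/implyP => neq.
  case: (pickP (fun w => (w \in S) != (w \in S'))) => [w hw | none].
    by apply/existsP; exists w; rewrite ffunE in_setU in_setT.
  have eSS : S = S' by apply/setP => w; move: (none w) => /negbFE/eqP.
  by rewrite eSS eqxx in neq.
- by apply/bigmax_leqP => S _; rewrite ffunE cardsT.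
Qed.

Definition NCTD (T : finType) (B : {set {set T}}) : nat :=
  ex_minn (has_nc_map_exists B).

(* Main.v *)
Require Import Defs.
From mathcomp Require Import all_boot.

Section Aux.
Variables (T : finType) (X : {set T}) (B : {set {set T}}).

Definition Big := [set S in B | 1 < #|S :\: X|].
Definition dpick (S S' : {set T}) := [pick u | (u \in S) != (u \in S')].
Definition extra (S : {set T}) : {set T} :=
  [set w | Some w \in [set dpick S S' | S' in Big]].
Definition Tm0 : {ffun {set T} -> {set T}} :=
  [ffun S => X :|: extra S :|: (if #|S :\: X| <= 1 then S :\: X else set0)].

Lemma extra_card S : #|extra S| <= #|Big|.
Proof.
rewrite -(card_imset _ (@Some_inj _)).
apply: leq_trans (leq_imset_card (dpick S) Big).
apply: subset_leq_card; apply/subsetP => o /imsetP [w].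
by rewrite inE => H ->.
Qed.

Lemma extra_in S S' : S' \in Big -> S != S' ->
  exists2 w, w \in extra S & (w \in S) != (w \in S').
Proof.
move=> HB neq.
have Hin : dpick S S' \in [set dpick S S'' | S'' in Big] by apply/imsetP; exists S'.
move: Hin; rewrite /dpick.
case: pickP => [w hw Hin | none _].
  by exists w => //; rewrite /extra inE.
have eSS : S = S' by apply/setP => w; move: (none w) => /negbFE/eqP.
by rewrite eSS eqxx in neq.
Qed.

End Aux.
Arguments Big {T}. Arguments dpick {T}. Arguments extra {T}. Arguments Tm0 {T}. Arguments extra_card {T}. Arguments extra_in {T X B S S'}.

Theorem lemma3 (T : finType) (e : rel T) (e_sym : symmetric e)
  (e_irr : irreflexive e) (X : {set T}) (hX : vertex_cover e X)
  (B : {set {set T}}) (hB : is_cnbh_family e B) :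
  NCTD B <= 2 ^ (#|X| + 1) + #|X|.
Proof.
have HBig : #|Big X B| <= #|X|.
  apply: leq_trans (leq_imset_card (cnbh e) X).
  apply: subset_leq_card; apply/subsetP => S; rewrite inE => /andP [SB big].
  have [v Sv] := hB S SB; rewrite Sv in big *.
  apply/imsetP; exists v => //.
  apply/negPn/negP => vX.
  move: big; apply/negP; rewrite -leqNgt.
  rewrite -(cards1 v); apply: subset_leq_card; apply/subsetP => u.
  rewrite /cnbh !inE => /andP [uX /orP [//|evu]].
  by move: (hX _ _ evu); rewrite (negbTE uX) (negbTE vX).
have Hn : has_nc_map_of_size B (#|X| + #|X| + 1).
  apply/existsP; exists (Tm0 X B); apply/andP; split.
  - apply/forallP => S; apply/implyP => SB; apply/forallP => S'; apply/implyP => S'B.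
    apply/implyP => neq.
    case: (boolP (S' \in Big X B)) => [S'big | S'nb].
      have [w wE wd] := extra_in S'big neq.
      by apply/existsP; exists w; rewrite !ffunE !in_setU wE /= orbT wd.
    case: (boolP (S \in Big X B)) => [Sbig | Snb].
      have neq' : S' != S by rewrite eq_sym.
      have [w wE wd] := extra_in Sbig neq'.
      by apply/existsP; exists w; rewrite !ffunE !in_setU wE /= !orbT eq_sym wd.
    move: Snb S'nb; rewrite !inE SB S'B /= -!leqNgt => Ss S's.
    case: (pickP (fun u => (u \in S) != (u \in S'))) => [w hw | none]; last first.
      have eSS : S = S' by apply/setP => w; move: (none w) => /negbFE/eqP.
      by rewrite eSS eqxx in neq.
    apply/existsP; exists w; rewrite hw andbT !ffunE Ss S's !inE.
    case: (boolP (w \in X)) => //= wX.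
    by move: hw; case: (w \in S); case: (w \in S'); rewrite ?orbT.
  - apply/bigmax_leqP => S _; rewrite ffunE.
    apply: leq_trans (leq_card_setU _ _) _.
    apply: leq_add; first first.
      by case: ifP => // _; rewrite cards0.
    apply: leq_trans (leq_card_setU _ _) _.
    by rewrite leq_add2l; apply: leq_trans (extra_card _ _ _) HBig.
rewrite /NCTD; case: ex_minnP => m _ Hmin.
apply: leq_trans (Hmin _ Hn) _.
rewrite -addnA addnC leq_add2r.
exact: ltnW (ltn_expl _ (isT : 1 < 2)).
Qed.
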